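(* CAP has at most one solution.
   Context: Let $s:[0,B]\to[0,\infty)$ satisfy $s(0)=0$, be strictly increasing, strictly concave, differentiable, with $s'$ continuous on $[0,B]$ (so $s'>0$ is strictly decreasing). Fix $b\in(0,B]$, an integer $k\ge2$, and constants $c_1\ge c_2\ge\cdots\ge c_k>0$. The Constrained Allocation Problem (CAP) is: find $\theta_1,\dots,\theta_k\ge0$ such that (i) $\theta_1+\cdots+\theta_k=b$; (ii) $\theta_1\le\theta_2\le\cdots\le\theta_k$; (iii) $s'(\theta_j)/s'(\theta_i)=c_j/c_i$ whenever $i<j$ and $\theta_j\ge\theta_i>0$; (iv) $s'(\theta_j)/s'(0)\ge c_j/c_i$ whenever $i<j$ and $\theta_j>\theta_i=0$. *)

(* Defs.v *)
From Stdlib Require Import Reals.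
Open Scope R_scope.

Fixpoint rsum (f : nat -> R) (n : nat) : R :=
  match n with
  | O => 0
  | S m => rsum f m + f (S m)
  end.

Definition in0B (B x : R) : Prop := 0 <= x <= B.

Definition has_deriv_within (B : R) (s : R -> R) (x d : R) : Prop :=
  forall eps : R, 0 < eps -> exists delta : R, 0 < delta /\
    forall y : R, in0B B y -> Rabs (y - x) < delta ->
      Rabs (s y - s x - d * (y - x)) <= eps * Rabs (y - x).

Definition cont_within (B : R) (f : R -> R) (x : R) : Prop :=
  forall eps : R, 0 < eps -> exists delta : R, 0 < delta /\
    forall y : R, in0B B y -> Rabs (y - x) < delta -> Rabs (f y - f x) < eps.

Definition admissible_s (B : R) (s ds : R -> R) : Prop :=
  0 < B /\
  s 0 = 0 /\
  (forall x, in0B B x -> 0 <= s x) /\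
  (forall x y, in0B B x -> in0B B y -> x < y -> s x < s y) /\
  (forall x y t, in0B B x -> in0B B y -> x <> y -> 0 < t < 1 ->
      s (t * x + (1 - t) * y) > t * s x + (1 - t) * s y) /\
  (forall x, in0B B x -> has_deriv_within B s x (ds x)) /\
  (forall x, in0B B x -> cont_within B ds x).

(* theta, c indexed by 1..k. CAP solution for budget b. *)
Definition CAP_solution (ds : R -> R) (b : R) (k : nat) (c theta : nat -> R)
  : Prop :=
  (forall i, (1 <= i <= k)%nat -> 0 <= theta i) /\
  rsum theta k = b /\
  (forall i j, (1 <= i)%nat -> (i < j)%nat -> (j <= k)%nat ->
      theta i <= theta j) /\
  (forall i j, (1 <= i)%nat -> (i < j)%nat -> (j <= k)%nat ->
      theta j >= theta i -> theta i > 0 ->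
      ds (theta j) / ds (theta i) = c j / c i) /\
  (forall i j, (1 <= i)%nat -> (i < j)%nat -> (j <= k)%nat ->
      theta j > theta i -> theta i = 0 ->
      ds (theta j) / ds 0 >= c j / c i).

(* Main.v *)
Require Import Defs.
From Stdlib Require Import Reals Lra Lia Psatz Arith.
Open Scope R_scope.

Lemma eps_le (A C D : R) : 0 < D -> (forall eps, 0 < eps -> A <= C + eps * D) -> A <= C.
Proof.
  intros HD H. destruct (Rle_dec A C) as [h|h]; auto.
  assert (e: 0 < (A - C) / (2 * D)) by (apply Rdiv_lt_0_compat; lra).
  specialize (H _ e). exfalso.
  replace ((A - C) / (2 * D) * D) with ((A - C)/2) in H by (field; lra). lra.
Qed.

Lemma abs_bounds (a e : R) : Rabs a <= e -> a <= e /\ - e <= a.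
Proof.
  intros H. split. pose proof (Rle_abs a); lra.
  pose proof (Rle_abs (-a)); rewrite Rabs_Ropp in H0; lra.
Qed.

Lemma small_t (x y delta : R) : x < y -> 0 < delta ->
  exists t, 0 < t < 1 /\ t * (y - x) < delta.
Proof.
  intros Hxy Hd. exists (Rmin (1/2) (delta / (2 * (y - x)))).
  assert (0 < delta / (2 * (y - x))) by (apply Rdiv_lt_0_compat; lra).
  pose proof (Rmin_l (1/2) (delta / (2 * (y - x)))).
  pose proof (Rmin_r (1/2) (delta / (2 * (y - x)))).
  assert (0 < Rmin (1/2) (delta / (2 * (y - x)))) by (apply Rmin_glb_lt; lra).
  split; [lra|].
  apply Rle_lt_trans with (delta / (2 * (y - x)) * (y - x)).
  apply Rmult_le_compat_r; lra.
  replace (delta / (2 * (y - x)) * (y - x)) with (delta / 2) by (field; lra). lra.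
Qed.

Section S.
Variables (B : R) (s ds : R -> R).
Hypothesis Ha : admissible_s B s ds.

Lemma slope_left x y : 0 <= x -> x < y -> y <= B -> s y - s x <= ds x * (y - x).
Proof.
  intros H0 Hxy HyB.
  destruct Ha as (HB & _ & _ & _ & Hconc & Hder & _).
  apply (eps_le _ _ (y - x)); [lra|]. intros eps He.
  destruct (Hder x ltac:(unfold in0B; lra) eps He) as (delta & Hd & Hdel).
  destruct (small_t x y delta Hxy Hd) as (t & Ht & Htd).
  set (z := t * y + (1 - t) * x).
  assert (Hz: in0B B z) by (unfold in0B, z; nra).
  assert (Hzx: z - x = t * (y - x)) by (unfold z; ring).
  assert (Hc := Hconc y x t ltac:(unfold in0B; lra) ltac:(unfold in0B; lra) ltac:(lra) Ht).
  fold z in Hc.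
  assert (Habs: Rabs (z - x) = t * (y - x)) by (rewrite Hzx; apply Rabs_pos_eq; nra).
  specialize (Hdel z Hz ltac:(lra)). rewrite Habs, Hzx in Hdel.
  apply abs_bounds in Hdel. destruct Hdel as [H1 _].
  assert (t * (s y - s x) <= t * (ds x * (y - x) + eps * (y - x))) by nra.
  apply Rmult_le_reg_l in H; lra.
Qed.

Lemma slope_right x y : 0 <= x -> x < y -> y <= B -> ds y * (y - x) <= s y - s x.
Proof.
  intros H0 Hxy HyB.
  destruct Ha as (HB & _ & _ & _ & Hconc & Hder & _).
  assert (forall eps, 0 < eps -> ds y * (y - x) <= (s y - s x) + eps * (y - x)).
  2:{ apply (eps_le _ _ (y - x)); [lra|]. auto. }
  intros eps He.
  destruct (Hder y ltac:(unfold in0B; lra) eps He) as (delta & Hd & Hdel).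
  destruct (small_t x y delta Hxy Hd) as (t & Ht & Htd).
  set (z := t * x + (1 - t) * y).
  assert (Hz: in0B B z) by (unfold in0B, z; nra).
  assert (Hzx: z - y = - (t * (y - x))) by (unfold z; ring).
  assert (Hc := Hconc x y t ltac:(unfold in0B; lra) ltac:(unfold in0B; lra) ltac:(lra) Ht).
  fold z in Hc.
  assert (Habs: Rabs (z - y) = t * (y - x)) by (rewrite Hzx, Rabs_Ropp; apply Rabs_pos_eq; nra).
  specialize (Hdel z Hz ltac:(lra)). rewrite Habs, Hzx in Hdel.
  apply abs_bounds in Hdel. destruct Hdel as [H1 _].
  assert (t * (ds y * (y - x)) <= t * ((s y - s x) + eps * (y - x))) by nra.
  apply Rmult_le_reg_l in H; lra.
Qed.

Lemma ds_dec x y : 0 <= x -> x < y -> y <= B -> ds y < ds x.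
Proof.
  intros H0 Hxy HyB.
  pose proof Ha as (HB & _ & _ & _ & Hconc & _).
  set (m := (x + y) / 2).
  assert (Hc := Hconc x y (1/2) ltac:(unfold in0B; lra) ltac:(unfold in0B; lra) ltac:(lra) ltac:(lra)).
  replace (1/2 * x + (1 - 1/2) * y) with m in Hc by (unfold m; field).
  pose proof (slope_left x m H0 ltac:(unfold m; lra) ltac:(unfold m; lra)) as L1.
  pose proof (slope_right m y ltac:(unfold m; lra) ltac:(unfold m; lra) HyB) as L2.
  assert (E1: m - x = (y - x) / 2) by (unfold m; field).
  assert (E2: y - m = (y - x) / 2) by (unfold m; field).
  rewrite E1 in L1. rewrite E2 in L2.
  assert (L3: ds y * ((y - x)/2) < ds x * ((y - x)/2)) by lra.
  apply Rmult_lt_reg_r in L3; lra.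
Qed.

Lemma ds_pos x : 0 <= x -> x < B -> 0 < ds x.
Proof.
  intros H0 H1.
  pose proof Ha as (HB & _ & _ & Hinc & _).
  pose proof (slope_left x B H0 H1 ltac:(lra)).
  pose proof (Hinc x B ltac:(unfold in0B; lra) ltac:(unfold in0B; lra) H1).
  assert (0 * (B - x) < ds x * (B - x)) by lra.
  apply Rmult_lt_reg_r in H3; lra.
Qed.
End S.

Lemma rsum_nonneg f n : (forall i, (1 <= i <= n)%nat -> 0 <= f i) -> 0 <= rsum f n.
Proof.
  induction n; simpl; intros H. lra.
  pose proof (H (S n) ltac:(lia)). assert (0 <= rsum f n) by (apply IHn; intros; apply H; lia). lra.
Qed.

Lemma rsum_one f n i : (forall i, (1 <= i <= n)%nat -> 0 <= f i) -> (1 <= i <= n)%nat -> f i <= rsum f n.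
Proof.
  induction n; simpl; intros H Hi. lia.
  assert (0 <= rsum f n) by (apply rsum_nonneg; intros; apply H; lia).
  destruct (Nat.eq_dec i (S n)) as [->|]. lra.
  assert (f i <= rsum f n) by (apply IHn; [intros; apply H; lia| lia]).
  pose proof (H (S n) ltac:(lia)). lra.
Qed.

Lemma rsum_two f n i j : (forall i, (1 <= i <= n)%nat -> 0 <= f i) -> (1 <= i)%nat -> (i < j)%nat -> (j <= n)%nat ->
  f i + f j <= rsum f n.
Proof.
  induction n; simpl; intros H Hi Hij Hj. lia.
  destruct (Nat.eq_dec j (S n)) as [->|].
  assert (f i <= rsum f n) by (apply rsum_one; [intros; apply H; lia| lia]). lra.
  assert (f i + f j <= rsum f n) by (apply IHn; [intros; apply H; lia| lia|lia|lia]).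
  pose proof (H (S n) ltac:(lia)). lra.
Qed.

Lemma rsum_zero f n : (forall i, (1 <= i <= n)%nat -> f i = 0) -> rsum f n = 0.
Proof.
  induction n; simpl; intros H. lra.
  rewrite IHn, H; [lra|lia|intros; apply H; lia].
Qed.

Lemma rsum_diff f g n i : (forall i, (1 <= i <= n)%nat -> f i <= g i) -> (1 <= i <= n)%nat ->
  g i - f i <= rsum g n - rsum f n.
Proof.
  revert i. induction n; simpl; intros i H Hi. lia.
  assert (forall m, 0 <= rsum g m - rsum f m \/ (m > n)%nat).
  { induction m; simpl. left; lra. destruct (le_gt_dec (S m) n). destruct IHm; [|lia].
    pose proof (H (S m) ltac:(lia)). left; lra. right; lia. }
  destruct (H0 n) as [h|]; [|lia].
  destruct (Nat.eq_dec i (S n)) as [->|]. lra.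
  assert (g i - f i <= rsum g n - rsum f n) by (apply IHn; [intros; apply H; lia| lia]).
  pose proof (H (S n) ltac:(lia)). lra.
Qed.

Lemma main_le (B : R) (s ds : R -> R) (b : R) (k : nat) (c : nat -> R)
  (theta theta' : nat -> R) :
  admissible_s B s ds -> 0 < b <= B -> (2 <= k)%nat ->
  (forall i, (1 <= i <= k)%nat -> c i > 0) ->
  CAP_solution ds b k c theta -> CAP_solution ds b k c theta' ->
  theta k <= theta' k ->
  forall i, (1 <= i <= k)%nat -> theta i <= theta' i.
Proof.
  intros Ha Hb Hk Hc (N & S & M & E & F) (N' & S' & M' & E' & F') Hkk i Hi.
  destruct (Nat.eq_dec i k) as [->|Hik]; [lra|].
  assert (Hik' : (i < k)%nat) by lia.
  pose proof (N i Hi) as Ni. pose proof (N' i Hi) as Ni'.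
  assert (Bk' : theta' k <= B) by (pose proof (rsum_one theta' k k N' ltac:(lia)); lra).
  assert (Mi' : theta' i <= theta' k) by (apply M'; lia).
  destruct (Req_dec (theta i) 0) as [->|Hti]; [lra|].
  assert (Pi : theta i > 0) by lra.
  pose proof (rsum_two theta k i k N ltac:(lia) Hik' ltac:(lia)) as T2.
  assert (Mi : theta i <= theta k) by (apply M; lia).
  assert (Bk : theta k < B) by lra.
  assert (Bi : theta i < B) by lra.
  pose proof (E i k ltac:(lia) Hik' ltac:(lia) ltac:(lra) Pi) as Eik.
  assert (dk : ds (theta' k) <= ds (theta k)).
  { destruct (Req_dec (theta k) (theta' k)) as [->|]; [lra|].
    left; apply (ds_dec B s ds Ha); lra. }
  assert (pk : 0 < ds (theta k)) by (apply (ds_pos B s ds Ha); lra).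
  assert (pi : 0 < ds (theta i)) by (apply (ds_pos B s ds Ha); lra).
  destruct (Req_dec (theta' i) 0) as [Z|Hti'].
  - exfalso.
    pose proof (F' i k ltac:(lia) Hik' ltac:(lia) ltac:(lra) Z) as Fik.
    assert (r0 : ds (theta i) < ds 0) by (apply (ds_dec B s ds Ha); lra).
    rewrite <- Eik in Fik.
    set (a := ds (theta' k)) in *. set (p := ds (theta k)) in *.
    set (q := ds (theta i)) in *. set (r := ds 0) in *.
    assert (a = (a / r) * r) by (field; lra).
    assert (p = (p / q) * q) by (field; lra).
    set (X := a / r) in *. set (Y := p / q) in *.
    assert (0 < Y) by (apply Rdiv_lt_0_compat; lra).
    nra.
  - destruct (Rle_dec (theta i) (theta' i)) as [|Hlt]; [auto|exfalso].
    pose proof (E' i k ltac:(lia) Hik' ltac:(lia) ltac:(lra) ltac:(lra)) as Eik'.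
    rewrite <- Eik in Eik'.
    assert (u0 : ds (theta i) < ds (theta' i)) by (apply (ds_dec B s ds Ha); lra).
    set (a := ds (theta' k)) in *. set (p := ds (theta k)) in *.
    set (q := ds (theta i)) in *. set (u := ds (theta' i)) in *.
    assert (a = (a / u) * u) by (field; lra).
    assert (p = (p / q) * q) by (field; lra).
    rewrite Eik' in H.
    set (X := p / q) in *.
    assert (0 < X) by (apply Rdiv_lt_0_compat; lra).
    nra.
Qed.

Theorem proposition3 (B : R) (s ds : R -> R) (b : R) (k : nat) (c : nat -> R)
  (theta theta' : nat -> R) :
  admissible_s B s ds ->
  0 < b <= B ->
  (2 <= k)%nat ->
  (forall i j, (1 <= i)%nat -> (i < j)%nat -> (j <= k)%nat -> c i >= c j) ->
  (forall i, (1 <= i <= k)%nat -> c i > 0) ->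
  CAP_solution ds b k c theta ->
  CAP_solution ds b k c theta' ->
  forall i, (1 <= i <= k)%nat -> theta i = theta' i.
Proof.
  intros Ha Hb Hk Hcc Hc H1 H2 i Hi.
  pose proof H1 as (_ & S1 & _). pose proof H2 as (_ & S2 & _).
  destruct (Rle_dec (theta k) (theta' k)) as [h|h].
  - pose proof (main_le B s ds b k c theta theta' Ha Hb Hk Hc H1 H2 h) as L.
    pose proof (rsum_diff theta theta' k i L Hi). pose proof (L i Hi). lra.
  - pose proof (main_le B s ds b k c theta' theta Ha Hb Hk Hc H2 H1 ltac:(lra)) as L.
    pose proof (rsum_diff theta' theta k i L Hi). pose proof (L i Hi). lra.
Qed.
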